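(* Let $\bar f:[a,b]\to\mathbb{R}_\mathcal{I}$ be continuous. If $\bar F:[a,b]\to\mathbb{R}_\mathcal{I}$ is a primitive of $\bar f$ on $[a,b]$, i.e. $\bar F'(x)=\bar f(x)$ for all $x\in[a,b]$, then $$\bar F(b)-\bar F(a)=(IR)\int_a^b\bar f(t)\,dt.$$
   Context: An interval number is a closed interval $\bar a=[a_l,a_r]$ with $a_l<a_r$ real; $\mathbb{R}_\mathcal{I}$ is the set of interval numbers. Write $a_c=(a_l+a_r)/2$, $a_w=(a_r-a_l)/2>0$, $\bar a=\langle a_c;a_w\rangle=[a_c-a_w,a_c+a_w]$. Operations: $\bar a+\bar b=\langle a_c+b_c;a_wb_w\rangle$, $\bar a-\bar b=\langle a_c-b_c;a_w/b_w\rangle$, $k\bar a=\langle ka_c;a_w^k\rangle$ for real $k$; for real $h\ne0$, $\bar c/h=\langle c_c/h;c_w^{1/h}\rangle$. Distance $d(\bar a,\bar b)=\sqrt{(a_c-b_c)^2+(\ln a_w-\ln b_w)^2}$; continuity and limits w.r.t. $d$. Derivative: $\bar F'(x)=\lim_{h\to0}\frac{\bar F(x+h)-\bar F(x)}{h}$. Interval Riemann integral: $\bar A=(IR)\int_a^b\bar f$ if for every $\varepsilon>0$ there is $\delta>0$ such that for every partition $a=t_0<\dots<t_n=b$ with mesh $<\delta$ and tags $\xi_i\in[t_{i-1},t_i]$, $d(\sum_i(t_i-t_{i-1})\bar f(\xi_i),\bar A)<\varepsilon$. *)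

(* Defs.v *)
From Stdlib Require Import Reals Lra.
Open Scope R_scope.

Record Inum := mkI { il : R; ir : R; ilr : il < ir }.

Definition icen (a : Inum) : R := (il a + ir a) / 2.
Definition iwid (a : Inum) : R := (ir a - il a) / 2.

Lemma ofcw_lt (c w : R) (H : 0 < w) : c - w < c + w.
Proof. lra. Qed.

Definition ofcw (c w : R) (H : 0 < w) : Inum := mkI (c - w) (c + w) (ofcw_lt c w H).

Lemma iwid_pos (a : Inum) : 0 < iwid a.
Proof. unfold iwid. destruct a as [l r h]; simpl. lra. Qed.

Lemma mul_pos_aux (x y : R) : 0 < x -> 0 < y -> 0 < x * y.
Proof. intros; apply Rmult_lt_0_compat; assumption. Qed.

Lemma div_pos_aux (x y : R) : 0 < x -> 0 < y -> 0 < x / y.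
Proof. intros; apply Rdiv_lt_0_compat; assumption. Qed.

Lemma rpow_pos_aux (x k : R) : 0 < Rpower x k.
Proof. unfold Rpower; apply exp_pos. Qed.

Definition iadd (a b : Inum) : Inum :=
  ofcw (icen a + icen b) (iwid a * iwid b) (mul_pos_aux _ _ (iwid_pos a) (iwid_pos b)).
Definition isub (a b : Inum) : Inum :=
  ofcw (icen a - icen b) (iwid a / iwid b) (div_pos_aux _ _ (iwid_pos a) (iwid_pos b)).
Definition iscal (k : R) (a : Inum) : Inum :=
  ofcw (k * icen a) (Rpower (iwid a) k) (rpow_pos_aux _ _).
(* c / h = <c_c / h ; c_w ^ (1/h)>  (meaningful for h <> 0) *)
Definition idiv (c : Inum) (h : R) : Inum :=
  ofcw (icen c / h) (Rpower (iwid c) (/ h)) (rpow_pos_aux _ _).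

(* zero interval number <0;1> (neutral for +), used to start finite sums *)
Definition izero : Inum := ofcw 0 1 Rlt_0_1.

Fixpoint isum (g : nat -> Inum) (n : nat) : Inum :=
  match n with
  | O => izero
  | S m => iadd (isum g m) (g m)
  end.

Definition idist (a b : Inum) : R :=
  sqrt ((icen a - icen b) ^ 2 + (ln (iwid a) - ln (iwid b)) ^ 2).

Definition icont_on (f : R -> Inum) (a b : R) : Prop :=
  forall x, a <= x <= b -> forall eps, 0 < eps -> exists delta, 0 < delta /\
    forall y, a <= y <= b -> Rabs (y - x) < delta -> idist (f y) (f x) < eps.

Definition is_iderive_on (F : R -> Inum) (a b x : R) (D : Inum) : Prop :=
  forall eps, 0 < eps -> exists delta, 0 < delta /\
    forall h, h <> 0 -> Rabs h < delta -> a <= x + h <= b ->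
      idist (idiv (isub (F (x + h)) (F x)) h) D < eps.

Definition tagged_partition (a b : R) (n : nat) (t xi : nat -> R) : Prop :=
  t O = a /\ t n = b /\
  (forall i, (i < n)%nat -> t i < t (S i)) /\
  (forall i, (i < n)%nat -> t i <= xi i <= t (S i)).

Definition mesh_lt (n : nat) (t : nat -> R) (delta : R) : Prop :=
  forall i, (i < n)%nat -> t (S i) - t i < delta.

Definition riemann_sum (f : R -> Inum) (n : nat) (t xi : nat -> R) : Inum :=
  isum (fun i => iscal (t (S i) - t i) (f (xi i))) n.

Definition is_IR_integral (f : R -> Inum) (a b : R) (A : Inum) : Prop :=
  forall eps, 0 < eps -> exists delta, 0 < delta /\
    forall n t xi, tagged_partition a b n t xi -> mesh_lt n t delta ->
      idist (riemann_sum f n t xi) A < eps.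

(* Main.v *)
Require Import Defs.
From Stdlib Require Import Reals.
From Stdlib Require Import Lra Lia.
From Coquelicot Require Import Coquelicot.
Open Scope R_scope.

Lemma icen_ofcw c w H : icen (ofcw c w H) = c.
Proof. unfold icen, ofcw; simpl; field. Qed.
Lemma iwid_ofcw c w H : iwid (ofcw c w H) = w.
Proof. unfold iwid, ofcw; simpl; field. Qed.

Definition lw (a : Inum) : R := ln (iwid a).

Lemma icen_iadd a b : icen (iadd a b) = icen a + icen b.
Proof. unfold iadd; apply icen_ofcw. Qed.
Lemma lw_iadd a b : lw (iadd a b) = lw a + lw b.
Proof. unfold lw, iadd; rewrite iwid_ofcw; apply ln_mult; apply iwid_pos. Qed.
Lemma icen_isub a b : icen (isub a b) = icen a - icen b.
Proof. unfold isub; apply icen_ofcw. Qed.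
Lemma lw_isub a b : lw (isub a b) = lw a - lw b.
Proof. unfold lw, isub; rewrite iwid_ofcw; apply ln_div; apply iwid_pos. Qed.
Lemma icen_iscal k a : icen (iscal k a) = k * icen a.
Proof. unfold iscal; apply icen_ofcw. Qed.
Lemma lw_iscal k a : lw (iscal k a) = k * lw a.
Proof. unfold lw, iscal; rewrite iwid_ofcw; unfold Rpower; apply ln_exp. Qed.
Lemma icen_idiv a h : icen (idiv a h) = icen a / h.
Proof. unfold idiv; apply icen_ofcw. Qed.
Lemma lw_idiv a h : lw (idiv a h) = lw a / h.
Proof. unfold lw, idiv; rewrite iwid_ofcw; unfold Rpower; rewrite ln_exp. unfold Rdiv; ring. Qed.
Lemma icen_izero : icen izero = 0.
Proof. unfold izero; apply icen_ofcw. Qed.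
Lemma lw_izero : lw izero = 0.
Proof. unfold lw, izero; rewrite iwid_ofcw; apply ln_1. Qed.

Fixpoint rsum (u : nat -> R) (n : nat) : R :=
  match n with O => 0 | S m => rsum u m + u m end.

Lemma icen_isum g n : icen (isum g n) = rsum (fun i => icen (g i)) n.
Proof. induction n; simpl. apply icen_izero. rewrite icen_iadd, IHn; reflexivity. Qed.
Lemma lw_isum g n : lw (isum g n) = rsum (fun i => lw (g i)) n.
Proof. induction n; simpl. apply lw_izero. rewrite lw_iadd, IHn; reflexivity. Qed.

Lemma sqrt_sum_le u v : sqrt (u ^ 2 + v ^ 2) <= Rabs u + Rabs v.
Proof.
  rewrite <- (sqrt_pow2 (Rabs u + Rabs v)) by (pose proof (Rabs_pos u); pose proof (Rabs_pos v); lra).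
  apply sqrt_le_1_alt.
  pose proof (Rabs_pos u); pose proof (Rabs_pos v).
  assert (u ^ 2 = Rabs u ^ 2) by (rewrite pow2_abs; reflexivity).
  assert (v ^ 2 = Rabs v ^ 2) by (rewrite pow2_abs; reflexivity).
  rewrite H1, H2. nra.
Qed.

Lemma sqrt_ge_l u v : Rabs u <= sqrt (u ^ 2 + v ^ 2).
Proof.
  rewrite <- (sqrt_pow2 (Rabs u)) by apply Rabs_pos.
  apply sqrt_le_1_alt.
  rewrite pow2_abs.
  pose proof (pow2_ge_0 v); lra.
Qed.

Lemma sqrt_ge_r u v : Rabs v <= sqrt (u ^ 2 + v ^ 2).
Proof. rewrite Rplus_comm; apply sqrt_ge_l. Qed.

Lemma idist_cen a b : Rabs (icen a - icen b) <= idist a b.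
Proof. apply sqrt_ge_l. Qed.
Lemma idist_lw a b : Rabs (lw a - lw b) <= idist a b.
Proof. apply sqrt_ge_r. Qed.
Lemma idist_le a b : idist a b <= Rabs (icen a - icen b) + Rabs (lw a - lw b).
Proof. apply sqrt_sum_le. Qed.

Section Clamp.
Variables a b : R.
Definition clamp (x : R) := Rmax a (Rmin b x).
Hypothesis hab : a < b.
Lemma clamp_in x : a <= clamp x <= b.
Proof. unfold clamp, Rmax, Rmin; repeat destruct Rle_dec; lra. Qed.
Lemma clamp_id x : a <= x <= b -> clamp x = x.
Proof. intros; unfold clamp, Rmax, Rmin; repeat destruct Rle_dec; lra. Qed.
Lemma clamp_lip x y : Rabs (clamp y - clamp x) <= Rabs (y - x).
Proof. unfold clamp, Rmax, Rmin; repeat destruct Rle_dec; unfold Rabs; repeat destruct Rcase_abs; lra. Qed.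
End Clamp.

Lemma cont_of_ed f x :
  (forall eps, 0 < eps -> exists d, 0 < d /\ forall y, Rabs (y - x) < d -> Rabs (f y - f x) < eps) ->
  continuity_pt f x.
Proof.
  intros H eps Heps. destruct (H eps Heps) as [d [Hd Hy]].
  exists d; split; auto. intros y [_ Hy']. apply Hy. exact Hy'.
Qed.

Lemma part_mono a b n t xi : tagged_partition a b n t xi ->
  forall k i, (i + k <= n)%nat -> t i <= t (i + k)%nat.
Proof.
  intros [_ [_ [Hm _]]] k. induction k; intros i Hi.
  - rewrite Nat.add_0_r; lra.
  - specialize (IHk i ltac:(lia)). replace (i + S k)%nat with (S (i + k)) by lia.
    specialize (Hm (i + k)%nat ltac:(lia)). lra.
Qed.

Lemma part_in a b n t xi : tagged_partition a b n t xi ->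
  forall i, (i <= n)%nat -> a <= t i <= b.
Proof.
  intros H i Hi. pose proof (part_mono _ _ _ _ _ H) as M.
  destruct H as [H0 [Hn _]]. split.
  - rewrite <- H0. specialize (M i 0%nat ltac:(lia)). exact M.
  - rewrite <- Hn. specialize (M (n - i)%nat i ltac:(lia)).
    replace (i + (n - i))%nat with n in M by lia. exact M.
Qed.

Lemma rsum_bound u v w n : (forall i, (i < n)%nat -> Rabs (u i - v i) <= w i) ->
  Rabs (rsum u n - rsum v n) <= rsum w n.
Proof.
  induction n; intros H; simpl.
  - rewrite Rminus_0_r, Rabs_R0; lra.
  - replace (rsum u n + u n - (rsum v n + v n)) with ((rsum u n - rsum v n) + (u n - v n)) by ring.
    eapply Rle_trans; [apply Rabs_triang|].
    apply Rplus_le_compat; [apply IHn; intros; apply H; lia | apply H; lia].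
Qed.

Lemma rsum_tele (G : R -> R) t n : rsum (fun i => G (t (S i)) - G (t i)) n = G (t n) - G (t O).
Proof. induction n; simpl. ring. rewrite IHn; ring. Qed.

Lemma rsum_tele2 t n e : rsum (fun i => (t (S i) - t i) * e) n = (t n - t O) * e.
Proof. induction n; simpl. ring. rewrite IHn; ring. Qed.

Lemma real_ftc (G g : R -> R) (a b : R) : a < b ->
  (forall x, a <= x <= b -> forall eps, 0 < eps -> exists d, 0 < d /\
     forall y, a <= y <= b -> Rabs (y - x) < d -> Rabs (g y - g x) < eps) ->
  (forall x, a <= x <= b -> forall eps, 0 < eps -> exists d, 0 < d /\
     forall h, h <> 0 -> Rabs h < d -> a <= x + h <= b -> Rabs ((G (x + h) - G x) / h - g x) < eps) ->
  forall eps, 0 < eps -> exists d, 0 < d /\ forall n t xi, tagged_partition a b n t xi -> mesh_lt n t d ->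
    Rabs (rsum (fun i => (t (S i) - t i) * g (xi i)) n - (G b - G a)) < eps.
Proof.
  intros hab Hc Hd eps Heps.
  set (Gc := fun x => G (clamp a b x)).
  set (gc := fun x => g (clamp a b x)).
  assert (Cg : forall x, continuity_pt gc x).
  { intro x. apply cont_of_ed. intros e He.
    destruct (Hc (clamp a b x) (clamp_in a b hab x) e He) as [d [Hd0 Hy]].
    exists d; split; auto. intros y Hyx. unfold gc. apply Hy. apply clamp_in; lra.
    exact (Rle_lt_trans _ _ _ (clamp_lip a b hab x y) Hyx). }
  assert (CG : forall x, continuity_pt Gc x).
  { intro x. apply cont_of_ed. intros e He.
    set (x0 := clamp a b x).
    assert (Hx0 : a <= x0 <= b) by (apply clamp_in; lra).
    destruct (Hd x0 Hx0 1 Rlt_0_1) as [d [Hd0 Hh]].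
    pose proof (Rabs_pos (g x0)) as Ag.
    exists (Rmin d (e / (1 + Rabs (g x0)))). split.
    { apply Rmin_pos; auto. apply Rdiv_lt_0_compat; lra. }
    intros y Hyx. unfold Gc. fold x0.
    set (h := clamp a b y - x0).
    assert (Hh1 : Rabs h <= Rabs (y - x)) by exact (clamp_lip a b hab x y).
    assert (Hm1 := Rmin_l d (e / (1 + Rabs (g x0)))).
    assert (Hm2 := Rmin_r d (e / (1 + Rabs (g x0)))).
    replace (clamp a b y) with (x0 + h) by (unfold h; ring).
    destruct (Req_dec h 0) as [H0|H0].
    { rewrite H0, Rplus_0_r, Rminus_diag, Rabs_R0; lra. }
    assert (Hq := Hh h H0 ltac:(lra) ltac:(unfold h; pose proof (clamp_in a b hab y); lra)).
    set (q := (G (x0 + h) - G x0) / h) in Hq.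
    replace (G (x0 + h) - G x0) with (q * h) by (unfold q; field; auto).
    rewrite Rabs_mult.
    assert (Rabs q < 1 + Rabs (g x0)).
    { replace q with ((q - g x0) + g x0) by ring.
      eapply Rle_lt_trans; [apply Rabs_triang|]. lra. }
    assert (Rabs h < e / (1 + Rabs (g x0))) by lra.
    assert (Rabs h * (1 + Rabs (g x0)) < e).
    { apply (Rmult_lt_compat_r (1 + Rabs (g x0))) in H1; [|lra].
      unfold Rdiv in H1. rewrite Rmult_assoc, Rinv_l, Rmult_1_r in H1; lra. }
    pose proof (Rabs_pos q); pose proof (Rabs_pos h). nra. }
  assert (DG : forall x, a < x < b -> is_derive Gc x (g x)).
  { intros x Hx. apply is_derive_Reals. intros e He.
    destruct (Hd x ltac:(lra) e He) as [d [Hd0 Hh]].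
    assert (P : 0 < Rmin d (Rmin (x - a) (b - x))).
    { apply Rmin_pos; auto. apply Rmin_pos; lra. }
    exists (mkposreal _ P). intros h H0 Hh'. simpl in Hh'.
    assert (Hm1 := Rmin_l d (Rmin (x - a) (b - x))).
    assert (Hm2 := Rmin_r d (Rmin (x - a) (b - x))).
    assert (Hm3 := Rmin_l (x - a) (b - x)).
    assert (Hm4 := Rmin_r (x - a) (b - x)).
    assert (Hr : a <= x + h <= b).
    { unfold Rabs in Hh'; destruct Rcase_abs in Hh'; lra. }
    unfold Gc. rewrite (clamp_id a b hab (x + h)) by exact Hr.
    rewrite (clamp_id a b hab x) by lra.
    apply Hh; auto; lra. }
  assert (He' : 0 < eps / (2 * (b - a))) by (apply Rdiv_lt_0_compat; lra).
  destruct (Heine gc (fun x => a <= x <= b) (compact_P3 a b) (fun x _ => Cg x) (mkposreal _ He'))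
    as [delta Hdel].
  exists delta. split; [apply cond_pos|].
  intros n t xi Hp Hmesh.
  pose proof (part_in _ _ _ _ _ Hp) as Pin.
  assert (Hp' := Hp). destruct Hp' as [H0 [Hn [Hinc Htag]]].
  replace (G b - G a) with (rsum (fun i => G (t (S i)) - G (t i)) n)
    by (rewrite rsum_tele, H0, Hn; reflexivity).
  eapply Rle_lt_trans.
  { apply (rsum_bound _ _ (fun i => (t (S i) - t i) * (eps / (2 * (b - a))))).
    intros i Hi.
    specialize (Hinc i Hi). specialize (Htag i Hi). specialize (Hmesh i Hi).
    pose proof (Pin i ltac:(lia)). pose proof (Pin (S i) ltac:(lia)).
    destruct (MVT_gen Gc (t i) (t (S i)) g) as [c [Hc1 Hc2]].
    { intros x Hx. rewrite Rmin_left, Rmax_right in Hx by lra. apply DG; lra. }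
    { intros x _. apply CG. }
    rewrite Rmin_left, Rmax_right in Hc1 by lra.
    unfold Gc in Hc2. rewrite !clamp_id in Hc2 by lra.
    rewrite Hc2.
    replace ((t (S i) - t i) * g (xi i) - g c * (t (S i) - t i)) with
      ((t (S i) - t i) * (g (xi i) - g c)) by ring.
    rewrite Rabs_mult, Rabs_right by lra.
    apply Rmult_le_compat_l; [lra|].
    assert (Hu := Hdel (xi i) c ltac:(simpl; lra) ltac:(simpl; lra)).
    unfold gc in Hu. rewrite !clamp_id in Hu by lra.
    simpl in Hu. left. apply Hu.
    unfold Rabs; destruct Rcase_abs; lra. }
  rewrite rsum_tele2, H0, Hn.
  replace ((b - a) * (eps / (2 * (b - a)))) with (eps / 2) by (field; lra).
  lra.
Qed.

Lemma rsum_ext u v n : (forall i, u i = v i) -> rsum u n = rsum v n.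
Proof. intro H; induction n; simpl; [reflexivity| rewrite IHn, H; reflexivity]. Qed.

Theorem theorem5p7 (f F : R -> Inum) (a b : R) (hab : a < b) :
  icont_on f a b ->
  (forall x, a <= x <= b -> is_iderive_on F a b x (f x)) ->
  is_IR_integral f a b (isub (F b) (F a)).
Proof.
  intros Hc Hd eps Heps.
  assert (He2 : 0 < eps / 2) by lra.
  destruct (real_ftc (fun x => icen (F x)) (fun x => icen (f x)) a b hab) with (eps := eps / 2)
    as [d1 [Hd1 H1]]; auto.
  { intros x Hx e He. destruct (Hc x Hx e He) as [d [Hd0 Hy]]. exists d; split; auto.
    intros y Hy1 Hy2. eapply Rle_lt_trans; [apply idist_cen|]. apply Hy; auto. }
  { intros x Hx e He. destruct (Hd x Hx e He) as [d [Hd0 Hy]]. exists d; split; auto.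
    intros h Hh1 Hh2 Hh3. eapply Rle_lt_trans; [|apply (Hy h Hh1 Hh2 Hh3)].
    eapply Rle_trans; [|apply idist_cen]. rewrite icen_idiv, icen_isub. lra. }
  destruct (real_ftc (fun x => lw (F x)) (fun x => lw (f x)) a b hab) with (eps := eps / 2)
    as [d2 [Hd2 H2]]; auto.
  { intros x Hx e He. destruct (Hc x Hx e He) as [d [Hd0 Hy]]. exists d; split; auto.
    intros y Hy1 Hy2. eapply Rle_lt_trans; [apply idist_lw|]. apply Hy; auto. }
  { intros x Hx e He. destruct (Hd x Hx e He) as [d [Hd0 Hy]]. exists d; split; auto.
    intros h Hh1 Hh2 Hh3. eapply Rle_lt_trans; [|apply (Hy h Hh1 Hh2 Hh3)].
    eapply Rle_trans; [|apply idist_lw]. rewrite lw_idiv, lw_isub. lra. }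
  exists (Rmin d1 d2). split; [apply Rmin_pos; auto|].
  intros n t xi Hp Hm.
  assert (Hm1 : mesh_lt n t d1).
  { intros i Hi. pose proof (Rmin_l d1 d2). specialize (Hm i Hi). lra. }
  assert (Hm2 : mesh_lt n t d2).
  { intros i Hi. pose proof (Rmin_r d1 d2). specialize (Hm i Hi). lra. }
  specialize (H1 n t xi Hp Hm1). specialize (H2 n t xi Hp Hm2).
  eapply Rle_lt_trans; [apply idist_le|].
  unfold riemann_sum. rewrite icen_isum, lw_isum, icen_isub, lw_isub.
  erewrite (rsum_ext _ (fun i => (t (S i) - t i) * icen (f (xi i)))).
  erewrite (rsum_ext (fun i => lw _) (fun i => (t (S i) - t i) * lw (f (xi i)))).
  lra.
  - intro i. apply lw_iscal.
  - intro i. apply icen_iscal.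
Qed.
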